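(* In the setting described in the context, $A^3A^*-[3]_qA^2A^*A+[3]_qAA^*A^2-A^*A^3=0$, $A^{*3}A-[3]_qA^{*2}AA^*+[3]_qA^*AA^{*2}-AA^{*3}=0$, $B^3B^*-[3]_qB^2B^*B+[3]_qBB^*B^2-B^*B^3=0$, $B^{*3}B-[3]_qB^{*2}BB^*+[3]_qB^*BB^{*2}-BB^{*3}=0$.
   Context: $\mathbb K$ is an algebraically closed field, $q\in\mathbb K$ nonzero and not a root of unity, $[3]_q=\frac{q^3-q^{-3}}{q-q^{-1}}$, $V$ a nonzero finite-dimensional $\mathbb K$-vector space. A tridiagonal pair on $V$ is an ordered pair $A,A^*$ of linear maps $V\to V$ such that: (i) each of $A,A^*$ is diagonalizable; (ii) there is an ordering $V_0,\dots,V_d$ of the eigenspaces of $A$ with $A^*V_i\subseteq V_{i-1}+V_i+V_{i+1}$ ($V_{-1}=V_{d+1}=0$); (iii) there is an ordering $V^*_0,\dots,V^*_\delta$ of the eigenspaces of $A^*$ with $AV^*_i\subseteq V^*_{i-1}+V^*_i+V^*_{i+1}$ ($V^*_{-1}=V^*_{\delta+1}=0$); (iv) no subspace $W\ne0,V$ satisfies $AW\subseteq W$, $A^*W\subseteq W$. It is known $d=\delta$; orderings as in (ii),(iii) are called standard. Setting: $A,A^*$ is a tridiagonal pair on $V$; $V_0,\dots,V_d$ (resp. $V^*_0,\dots,V^*_d$) is a standard ordering of the eigenspaces of $A$ (resp. $A^*$); the eigenvalue of $A$ on $V_i$ is $aq^{2i-d}$ and that of $A^*$ on $V^*_i$ is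 $a^*q^{d-2i}$ for some nonzero $a,a^*\in\mathbb K$; $b,b^*\in\mathbb K$ are nonzero. For $0\le i\le d$ the subspaces $(V^*_0+\cdots+V^*_i)\cap(V_0+\cdots+V_{d-i})$ form a decomposition of $V$ (nonzero, direct sum equal to $V$), as do the subspaces $(V^*_{d-i}+\cdots+V^*_d)\cap(V_i+\cdots+V_d)$. $B$ is the linear map acting as $bq^{2i-d}I$ on $(V^*_0+\cdots+V^*_i)\cap(V_0+\cdots+V_{d-i})$, and $B^*$ is the linear map acting as $b^*q^{d-2i}I$ on $(V^*_{d-i}+\cdots+V^*_d)\cap(V_i+\cdots+V_d)$, for each $i$. *)

(* Defs.v *)
From HB Require Import structures.
From mathcomp Require Import all_boot all_order all_algebra.
Set Implicit Arguments. Unset Strict Implicit. Unset Printing Implicit Defensive.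
Import Order.TTheory GRing.Theory Num.Theory.
Local Open Scope ring_scope.
Local Open Scope vspace_scope.

Section TD.
Variables (K : fieldType) (V : vectType K).

Definition diagonalizable (f : 'End(V)) : Prop :=
  exists s : seq K, (\sum_(x <- s) passmx.leigenspace f x)%VS = fullv.

(* the i-th subspace of an ordering th_0,...,th_d of eigenvalues of f,
   with the convention V_i = 0 for i > d *)
Definition esp (f : 'End(V)) (d : nat) (th : nat -> K) (i : nat) : {vspace V} :=
  if (i <= d)%N then passmx.leigenspace f (th i) else 0%VS.

(* For i = 0 the
   term i.-1 = 0 gives V_0 again, which is harmless. *)
Definition standard_ordering (f g : 'End(V)) (d : nat) (th : nat -> K) : Prop :=
  [/\ (forall i j, (i <= d)%N -> (j <= d)%N -> th i = th j -> i = j),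
      (forall i, (i <= d)%N -> passmx.leigenspace f (th i) != 0%VS),
      (forall x, passmx.leigenspace f x != 0%VS -> exists2 i, (i <= d)%N & x = th i) &
      (forall i, (i <= d)%N ->
         (g @: esp f d th i <=
            esp f d th i.-1 + esp f d th i + esp f d th i.+1)%VS)].

Definition tridiagonal_pair (A As : 'End(V)) : Prop :=
  [/\ diagonalizable A, diagonalizable As,
      (exists d th, standard_ordering A As d th),
      (exists d th, standard_ordering As A d th) &
      (forall W : {vspace V}, (A @: W <= W)%VS -> (As @: W <= W)%VS ->
          W = 0%VS \/ W = fullv)].

Definition qint3 (q : K) : K := (q ^+ 3 - q ^- 3) / (q - q^-1).

Definition qserre (q : K) (X Y : 'End(V)) : 'End(V) :=
  (X \o X \o X \o Y)%VF - qint3 q *: (X \o X \o Y \o X)%VF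
  + qint3 q *: (X \o Y \o X \o X)%VF - (Y \o X \o X \o X)%VF.

End TD.

(* Main.v *)
Require Import Defs.
From HB Require Import structures.
From mathcomp Require Import all_boot all_order all_algebra.
From mathcomp Require Import ring zify.
Import Order.TTheory GRing.Theory Num.Theory.
Local Open Scope ring_scope.

Module GenPart.
Set Implicit Arguments. Unset Strict Implicit.
Section Gen.
Variables (K : fieldType) (V : vectType K).
Implicit Types (W T : nat -> {vspace V}).

Lemma sumI_subv W m n (U : {vspace V}) :
  (forall j, (m <= j < n)%N -> (W j <= U)%VS) -> (\sum_(m <= j < n) W j <= U)%VS.
Proof.
elim: n => [|n IH] H; first by rewrite big_geq // sub0v.
case: (leqP m n) => hmn; last by rewrite big_geq // sub0v.
rewrite big_nat_recr //= subv_add IH ?H ?hmn ?ltnSn //.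
by move=> j /andP[h1 h2]; apply: H; rewrite h1 ltnS ltnW.
Qed.

Lemma sumI_map W (g : 'End(V)) m n (U : {vspace V}) :
  (forall j, (m <= j < n)%N -> forall v, v \in W j -> g v \in U) ->
  forall v, v \in (\sum_(m <= j < n) W j)%VS -> g v \in U.
Proof.
elim: n => [|n IH] H v.
  by rewrite big_geq // memv0 => /eqP->; rewrite linear0 mem0v.
case: (leqP m n) => hmn; last first.
  by rewrite big_geq // memv0 => /eqP->; rewrite linear0 mem0v.
rewrite big_nat_recr //= => /memv_addP[u hu [w hw ->]].
rewrite linearD memvD //; last by apply: (H n) => //; rewrite hmn ltnSn.
by apply: IH hu => j /andP[h1 h2]; apply: H; rewrite h1 ltnS ltnW.
Qed.

Lemma memI W l h j v : (l <= j < h)%N -> v \in W j -> v \in (\sum_(l <= i < h) W i)%VS.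
Proof.
case/andP=> h1 h2 hv; rewrite (big_cat_nat h1 (ltnW h2)) /= (big_ltn h2).
rewrite -[v]add0r; apply: memv_add; first exact: mem0v.
rewrite -[v]addr0; apply: memv_add => //; exact: mem0v.
Qed.

Lemma sumI_mono W l h l' h' : (l' <= l)%N -> (h <= h')%N ->
  (\sum_(l <= j < h) W j <= \sum_(l' <= j < h') W j)%VS.
Proof.
move=> hl hh; apply: sumI_subv => j /andP[h1 h2]; apply/subvP => v hv.
by apply: memI hv; rewrite (leq_trans hl h1) (leq_trans h2 hh).
Qed.


Lemma phi_eig (X : 'End(V)) (l m k : K) w : X w = m *: w ->
  (X \o X \o X - (k * l) *: (X \o X) + (k * l ^+ 2) *: X - (l ^+ 3) *: \1)%VF w
  = (m ^+ 3 - k * l * m ^+ 2 + k * l ^+ 2 * m - l ^+ 3) *: w.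
Proof.
move=> hw.
rewrite !(add_lfunE, opp_lfunE, scale_lfunE, comp_lfunE, id_lfunE).
rewrite hw !linearZ /= hw !linearZ /= hw !scalerA !scalerN -!scaleNr -!scalerDl.
by congr (_ *: _); ring.
Qed.

Lemma serre_gen (X Y : 'End(V)) W (lam : nat -> K) r k d :
  (\sum_(i < d.+1) W i)%VS = fullv ->
  (forall i v, v \in W i -> X v = lam i *: v) ->
  (forall i, lam i.+1 = r * lam i) ->
  r ^+ 3 - k * r ^+ 2 + k * r - 1 = 0 ->
  (forall i v, (i <= d)%N -> v \in W i -> Y v \in (W i.-1 + W i + W i.+1)%VS) ->
  (X \o X \o X \o Y)%VF - k *: (X \o X \o Y \o X)%VF
  + k *: (X \o Y \o X \o X)%VF - (Y \o X \o X \o X)%VF = 0.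
Proof.
move=> hsum hX hlam hr hY; apply/lfunP => v; rewrite zero_lfunE.
have := memvf v; rewrite -hsum => /memv_sumP[vs hvs ->].
rewrite linear_sum; apply: big1 => i _.
have hu : vs i \in W i := hvs i isT.
set u := vs i in hu *.
pose l := lam i.
pose Phi := (X \o X \o X - (k * l) *: (X \o X) + (k * l ^+ 2) *: X - (l ^+ 3) *: \1)%VF.
transitivity (Phi (Y u)).
  rewrite /=.
  rewrite /Phi !(add_lfunE, opp_lfunE, scale_lfunE, comp_lfunE, id_lfunE).
  rewrite (hX i u hu) !linearZ /= (hX i u hu) !linearZ /= (hX i u hu) !linearZ /=.
  rewrite !scalerA /l; congr (_ + _ + _ + _); congr (_ *: _); ring.
have hY' := hY i u (ltn_ord i) hu.
move: hY' => /memv_addP[w12 /memv_addP[w1 h1 [w2 h2 ->]] [w3 h3 ->]].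
rewrite !linearD /= (phi_eig l k (hX _ _ h1)) (phi_eig l k (hX _ _ h2)) (phi_eig l k (hX _ _ h3)).
have P0 : forall x, x ^+ 3 - k * x * x ^+ 2 + k * x ^+ 2 * x - x ^+ 3 = 0.
  by move=> x; ring.
rewrite /l P0 hlam.
have -> : (r * lam i) ^+ 3 - k * lam i * (r * lam i) ^+ 2 + k * lam i ^+ 2 * (r * lam i) - lam i ^+ 3
   = lam i ^+ 3 * (r ^+ 3 - k * r ^+ 2 + k * r - 1) by ring.
rewrite hr mulr0.
case: (nat_of_ord i) => [|i'] /=; first by rewrite P0 !scale0r !addr0.
rewrite hlam.
have -> : lam i' ^+ 3 - k * (r * lam i') * lam i' ^+ 2 + k * (r * lam i') ^+ 2 * lam i' - (r * lam i') ^+ 3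
   = - (lam i' ^+ 3 * (r ^+ 3 - k * r ^+ 2 + k * r - 1)) by ring.
by rewrite hr mulr0 oppr0 !scale0r !addr0.
Qed.


Lemma comb_xu (x u : V) a b c a' e :
  a*:x + b*:u + c*:u + a'*:x + e*:u = (a + a')*:x + (b + c + e)*:u.
Proof.
rewrite !scalerDl -!addrA; congr (_ + _).
by rewrite (addrCA (c*:u)) (addrCA (b*:u)).
Qed.

Lemma esp_eig (f : 'End(V)) d th i v : v \in esp f d th i -> f v = th i *: v.
Proof.
rewrite /esp; case: ifP => _; last by rewrite memv0 => /eqP->; rewrite linear0 scaler0.
rewrite memv_ker !(add_lfunE, opp_lfunE, scale_lfunE, id_lfunE) subr_eq0.
by move/eqP.
Qed.

Lemma eig_mem (f : 'End(V)) a v : f v = a *: v -> v \in passmx.leigenspace f a.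
Proof.
move=> h; rewrite memv_ker !(add_lfunE, opp_lfunE, scale_lfunE, id_lfunE) h.
by rewrite subrr.
Qed.

Lemma esp_big (f : 'End(V)) d th i : (d < i)%N -> esp f d th i = 0%VS.
Proof. by rewrite /esp ltnNge => /negbTE->. Qed.

Lemma weyl (X Z : 'End(V)) (T : nat -> {vspace V}) d rho c (al mu : nat -> K) :
  (\sum_(i < d.+1) T i)%VS = fullv ->
  (forall i v, (i <= d)%N -> v \in T i -> Z v = mu i *: v) ->
  (forall i v, (i <= d)%N -> v \in T i ->
     Z (X v - al i *: v) = (rho * mu i) *: (X v - al i *: v)) ->
  (forall i, (i <= d)%N -> al i * mu i = c) ->
  forall v, Z (X v) = rho *: X (Z v) + ((1 - rho) * c) *: v.
Proof.
move=> hsum hZ hZX hc.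
pose L := ((Z \o X) - rho *: (X \o Z) - ((1 - rho) * c) *: \1)%VF.
suff hL : forall v, L v = 0.
  move=> v; have := hL v.
  rewrite /L !(add_lfunE, opp_lfunE, scale_lfunE, id_lfunE, comp_lfunE).
  by move/eqP; rewrite subr_eq0 subr_eq => /eqP->; rewrite addrC.
move=> v; have := memvf v; rewrite -hsum => /memv_sumP[vs hvs ->].
rewrite linear_sum; apply: big1 => i _.
have hu : vs i \in T i := hvs i isT.
set u := vs i in hu *.
have hi : (i <= d)%N := ltn_ord i.
have h1 := hZX i u hi hu.
rewrite linearB linearZ /= (hZ i u hi hu) in h1.
have h2 : Z (X u) = (rho * mu i) *: (X u - al i *: u) + al i *: (mu i *: u).
  by rewrite -h1 subrK.
change (L u = 0); rewrite /L !(add_lfunE, opp_lfunE, scale_lfunE, id_lfunE, comp_lfunE).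
rewrite h2 (hZ i u hi hu) linearZ /= -(hc i hi).
rewrite [X (_ *: _)]linearZ /= !scalerDr !scalerN !scalerA -!scaleNr.
rewrite comb_xu [t in t *: X u](_ : _ = 0) ?[t in t *: u](_ : _ = 0) ?scale0r ?addr0 //; ring.
Qed.

Lemma eig_shift (X Z : 'End(V)) rho c (al : K) v : rho != 0 -> al != 0 ->
  (forall v, Z (X v) = rho *: X (Z v) + ((1 - rho) * c) *: v) ->
  X v = al *: v ->
  X (Z v - (c / al) *: v) = (rho^-1 * al) *: (Z v - (c / al) *: v).
Proof.
move=> hr ha hw hv.
have h := hw v; rewrite hv linearZ /= in h.
have hX : X (Z v) = rho^-1 *: (al *: Z v - ((1 - rho) * c) *: v).
  by rewrite h addrK scalerA mulVf // scale1r.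
rewrite linearB linearZ /= hX hv !scalerBr !scalerA.
rewrite -!addrA; congr (_ + _); rewrite -!scaleNr -scalerDl; congr (_ *: _).
by field; apply/andP.
Qed.


Lemma mono_up (F : nat -> {vspace V}) : (forall i, (F i <= F i.+1)%VS) ->
  forall m n, (m <= n)%N -> (F m <= F n)%VS.
Proof.
move=> hF m n /subnK <-; elim: (n - m)%N => [|k IH]; first by rewrite add0n subvv.
by rewrite addSn; apply: subv_trans IH (hF _).
Qed.

Lemma mono_down (F : nat -> {vspace V}) : (forall i, (F i.+1 <= F i)%VS) ->
  forall m n, (m <= n)%N -> (F n <= F m)%VS.
Proof.
move=> hF m n /subnK <-; elim: (n - m)%N => [|k IH]; first by rewrite add0n subvv.
by rewrite addSn; apply: subv_trans (hF _) IH.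
Qed.

Section Split.
Variables (F H : nat -> {vspace V}) (d : nat).
Let S := fun i => (F i :&: H i)%VS.
Hypotheses (hF : forall i, (F i <= F i.+1)%VS) (hH : forall i, (H i.+1 <= H i)%VS)
  (hdir : forall i, (i < d)%N -> (S i :&: S i.+1 = 0)%VS).

Lemma capS0 i x : (i < d)%N -> x \in S i -> x \in S i.+1 -> x = 0.
Proof.
move=> hi h1 h2; apply/eqP; rewrite -memv0 -(hdir hi) memv_cap h1 h2 //.
Qed.

Lemma L1 k h : (k < h)%N -> (h <= d.+1)%N -> forall x, x \in F k ->
  x \in (\sum_(0 <= m < h) S m)%VS -> x \in (\sum_(0 <= m < k.+1) S m)%VS.
Proof.
elim: h => [//|h IH] hkh hh x hx.
case: (ltngtP k h) => hk; last 2 first.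
- by rewrite ltnS leqNgt hk in hkh.
- by rewrite hk.
rewrite big_nat_recr //= => /memv_addP[y hy [s hs hxe]].
have hh1 : (0 < h)%N by apply: leq_ltn_trans hk.
have hyF : y \in F h.-1.
  apply: subvP hy; apply: sumI_subv => m /andP[_ hm].
  apply: subv_trans (capvSl _ _) _; apply: mono_up => //.
  by rewrite -ltnS prednK.
have hxF : x \in F h.-1 by apply: subvP hx; apply: mono_up => //; rewrite -ltnS prednK.
have hsS : s \in S h.-1.
  rewrite memv_cap; apply/andP; split.
    have -> : s = x - y by rewrite hxe addrAC subrr add0r.
    by apply: memvB.
  move: hs; rewrite memv_cap => /andP[_ hs]; apply: subvP hs.
  by apply: mono_down => //; apply: leq_pred.
have s0 : s = 0.
  apply: (@capS0 h.-1 s) => //; first by rewrite -ltnS prednK.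
  by rewrite prednK.
move: hxe; rewrite s0 addr0 => hxe; subst x; apply: IH => //; exact: ltnW.
Qed.


Lemma L2 n : forall l h x, (l + n <= d)%N -> x \in H (l + n) ->
  x \in (\sum_(l <= m < h) S m)%VS -> x \in (\sum_(l + n <= m < h) S m)%VS.
Proof.
elim: n => [|n IH] l h x hln hx; first by rewrite addn0.
case: (leqP h l) => hhl.
  by rewrite big_geq // memv0 => /eqP->; rewrite mem0v.
rewrite (big_ltn hhl) => /memv_addP[s hs [y hy hxe]].
have hyH : y \in H l.+1.
  apply: subvP hy; apply: sumI_subv => m /andP[hm _].
  by apply: subv_trans (capvSr _ _) _; apply: mono_down.
have hxH : x \in H l.+1 by apply: subvP hx; apply: mono_down => //; rewrite addnS ltnS leq_addr.
have hsS : s \in S l.+1.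
  rewrite memv_cap; apply/andP; split.
    move: hs; rewrite memv_cap => /andP[hs _]; exact: (subvP (hF l)).
  have -> : s = x - y by rewrite hxe addrK.
  by apply: memvB.
have s0 : s = 0.
  apply: (@capS0 l s) => //; first by apply: leq_trans hln; rewrite addnS ltnS leq_addr.
move: hxe; rewrite s0 add0r => hxe; subst x.
rewrite -addSnnS; apply: IH => //; by rewrite addSnnS.
Qed.

Lemma split_tri (Z : 'End(V)) (W : nat -> {vspace V}) :
  (\sum_(i < d.+1) S i)%VS = fullv ->
  (forall i, (i <= d)%N -> (S i <= W i)%VS) ->
  (forall i v, (i <= d)%N -> v \in F i -> Z v \in F i.+1) ->
  (forall i v, (i <= d)%N -> v \in H i -> Z v \in H i.-1) ->
  forall i v, (i <= d)%N -> v \in S i -> Z v \in (W i.-1 + W i + W i.+1)%VS.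
Proof.
move=> hsum hSW hZF hZH i v hi hv.
move: hv; rewrite memv_cap => /andP[hvF hvH].
have zF := hZF i v hi hvF; have zH := hZH i v hi hvH.
have zall : Z v \in (\sum_(0 <= m < d.+1) S m)%VS by rewrite big_mkord hsum memvf.
have [h [hh1 hh2 zh]] : exists h, [/\ (h <= i.+2)%N, (h <= d.+1)%N &
    Z v \in (\sum_(0 <= m < h) S m)%VS].
  case: (ltngtP i d) => hid; last 2 first.
  - by rewrite ltnNge hi in hid.
  - by exists d.+1; rewrite hid.
  by exists i.+2; split => //; apply: (@L1 i.+1 d.+1) => //.
have := @L2 i.-1 0 h (Z v).
rewrite add0n => /(_ (leq_trans (leq_pred _) hi) zH zh) zz.
apply: subvP zz; apply: sumI_subv => m /andP[hm1 hm2].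
have hmd : (m <= d)%N by rewrite -ltnS; apply: leq_trans hm2 hh2.
apply: subv_trans (hSW m hmd) _.
have : m = i.-1 \/ m = i \/ m = i.+1.
  clear -hm1 hm2 hh1; move: hm1 hm2 hh1; case: i => [|i] /=; lia.
case=> [->|[->|->]].
- by apply: subv_trans (addvSl _ _) (addvSl _ _).
- by apply: subv_trans (addvSr _ _) (addvSl _ _).
- exact: addvSr.
Qed.

End Split.


Lemma esp_sub (f g : 'End(V)) d th x k : standard_ordering f g d th ->
  (forall j, (j <= d)%N -> x = th j -> j = k) ->
  (passmx.leigenspace f x <= esp f d th k)%VS.
Proof.
case=> _ _ h3 _ hk.
have [->|nz] := eqVneq (passmx.leigenspace f x) 0%VS; first exact: sub0v.
have [j hj hx] := h3 x nz.
have hjk := hk j hj hx; subst k.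
by rewrite /esp hj -hx subvv.
Qed.

Lemma shift_mem (X Z : 'End(V)) rho c al v (Wv Wn : {vspace V}) :
  rho != 0 -> al != 0 ->
  (forall v, Z (X v) = rho *: X (Z v) + ((1 - rho) * c) *: v) ->
  X v = al *: v -> v \in Wv ->
  (passmx.leigenspace X (rho^-1 * al) <= Wn)%VS -> Z v \in (Wv + Wn)%VS.
Proof.
move=> hr ha hw hv hWv hsub.
have -> : Z v = (c / al) *: v + (Z v - (c / al) *: v) by rewrite addrC subrK.
apply: memv_add; first exact: memvZ.
move/subvP: hsub; apply; apply: eig_mem; exact: eig_shift.
Qed.

Lemma esp_zero (f : 'End(V)) d th j v : v \in esp f d th j -> (j <= d)%N \/ v = 0.
Proof.
rewrite /esp; case: ifP => hj; first by left.
by rewrite memv0 => /eqP; right.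
Qed.

Lemma memI_esp (f : 'End(V)) d th l h j v : (l <= j)%N -> ((j < h)%N \/ (d < j)%N) ->
  v \in esp f d th j -> v \in (\sum_(l <= m < h) esp f d th m)%VS.
Proof.
move=> hl [hh|hd] hv; first by apply: memI hv; rewrite hl hh.
by move: hv; rewrite esp_big // memv0 => /eqP->; rewrite mem0v.
Qed.

Lemma tri_mem (f : 'End(V)) d th j (U : {vspace V}) :
  (forall m, (m == j.-1) || (m == j) || (m == j.+1) -> (esp f d th m <= U)%VS) ->
  (esp f d th j.-1 + esp f d th j + esp f d th j.+1 <= U)%VS.
Proof.
by move=> H; rewrite !subv_add !H ?eqxx ?orbT.
Qed.

End Gen.

Section Gen2.
Variables (K : fieldType) (V : vectType K).

Lemma dir_adj (S : nat -> {vspace V}) d : directv (\sum_(i < d.+1) S i) ->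
  forall i, (i < d)%N -> (S i :&: S i.+1 = 0)%VS.
Proof.
move/directv_sumP => hd i hi.
have hi1 : (i < d.+1)%N by apply: ltnW.
have hi2 : (i.+1 < d.+1)%N by [].
apply/eqP; rewrite -subv0 -(hd (Ordinal hi1) isT); apply: capvS (subvv _) _.
apply: (sumv_sup (Ordinal hi2)) => //=.
by rewrite -val_eqE /= gtn_eqF.
Qed.

Lemma memI2 (f : 'End(V)) d th l h j j' u : (l <= j)%N -> ((j < h)%N \/ (d < j)%N) ->
  (l <= j')%N -> ((j' < h)%N \/ (d < j')%N) ->
  u \in (esp f d th j + esp f d th j')%VS -> u \in (\sum_(l <= m < h) esp f d th m)%VS.
Proof.
move=> h1 h2 h3 h4 /memv_addP[x hx [y hy ->]].
by apply: memvD; [apply: memI_esp hx | apply: memI_esp hy].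
Qed.

Lemma sum_if (S : nat -> {vspace V}) d :
  (\sum_(i < d.+1) (if (i <= d)%N then S i else 0%VS))%VS = (\sum_(i < d.+1) S i)%VS.
Proof. by apply: eq_bigr => i _; rewrite -ltnS ltn_ord. Qed.

End Gen2.

End GenPart.
Import GenPart.

Module MainPart.
Ltac slia := repeat match goal with H : ?T |- _ =>
   lazymatch T with nat => fail | int => fail | is_true (_ <= _)%N => fail
   | is_true (_ < _)%N => fail | _ = _ :> nat => fail | _ => clear H end end; lia.

Section Main.
Variables (K : fieldType) (V : vectType K) (q : K) (A As B Bs : 'End(V)) (d : nat)
  (a as_ b bs : K).
Hypotheses (hq0 : q != 0) (hqn : forall n : nat, (0 < n)%N -> q ^+ n != 1).

Lemma qD (m n : int) : q ^ m * q ^ n = q ^ (m + n).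
Proof. by rewrite expfzDr. Qed.

Lemma q_inj (m n : int) : q ^ m = q ^ n -> m = n.
Proof.
move=> h.
have e : q ^ (m - n) = 1 by rewrite -qD h qD subrr expr0z.
case E: (m - n)%R e => [k|k] e.
- case: k E e => [|k] E e; first by apply/eqP; rewrite -subr_eq0 E.
  by have := hqn k.+1 isT; rewrite -exprnP in e; rewrite e eqxx.
- have e' : (q ^+ k.+1)^-1 = 1 := e.
  by have := hqn k.+1 isT; move/eqP: e'; rewrite invr_eq1 => ->.
Qed.

Lemma q_cancel (c : K) (m n : int) : c != 0 -> c * q ^ m = c * q ^ n -> m = n.
Proof. by move=> hc /(mulfI hc) /q_inj. Qed.

Lemma q2inv : (q ^ (2:int))^-1 = q ^ (-2 : int).
Proof. by rewrite invr_expz. Qed.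

Lemma qm2inv : (q ^ (-2:int))^-1 = q ^ (2 : int).
Proof. by rewrite invr_expz opprK. Qed.

Lemma qnz (m : int) : q ^ m != 0.
Proof. exact: expfz_neq0. Qed.


Variables (th ths : nat -> K).
Hypotheses (hth : forall i, th i = a * q ^ ((2 * i)%:Z - d%:Z))
  (hths : forall i, ths i = as_ * q ^ (d%:Z - (2 * i)%:Z)).
Hypotheses (hSA : standard_ordering A As d th) (hSAs : standard_ordering As A d ths)
  (ha : a != 0) (has : as_ != 0) (hb : b != 0) (hbs : bs != 0).
Local Notation Vi := (esp A d th).
Local Notation Vsi := (esp As d ths).

Lemma thnz j : th j != 0. Proof. by rewrite hth mulf_neq0 // qnz. Qed.
Lemma thsnz j : ths j != 0. Proof. by rewrite hths mulf_neq0 // qnz. Qed.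

Lemma triAs v j : v \in Vi j -> As v \in (Vi j.-1 + Vi j + Vi j.+1)%VS.
Proof.
move=> hv; case: (esp_zero hv) => [hj|->]; last by rewrite linear0 mem0v.
case: hSA => _ _ _ h4; apply: (subvP (h4 j hj)); exact: memv_img.
Qed.

Lemma triA v j : v \in Vsi j -> A v \in (Vsi j.-1 + Vsi j + Vsi j.+1)%VS.
Proof.
move=> hv; case: (esp_zero hv) => [hj|->]; last by rewrite linear0 mem0v.
case: hSAs => _ _ _ h4; apply: (subvP (h4 j hj)); exact: memv_img.
Qed.

Lemma Vi_up j : (passmx.leigenspace A ((q ^ (-2:int))^-1 * th j) <= Vi j.+1)%VS.
Proof.
apply: esp_sub hSA _ => k hk; rewrite qm2inv !hth mulrCA qD => /q_cancel -/(_ ha).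
lia.
Qed.

Lemma Vi_down j : (passmx.leigenspace A ((q ^ (2:int))^-1 * th j) <= Vi j.-1)%VS.
Proof.
apply: esp_sub hSA _ => k hk; rewrite q2inv !hth mulrCA qD => /q_cancel -/(_ ha).
lia.
Qed.

Lemma Vsi_up j : (passmx.leigenspace As ((q ^ (2:int))^-1 * ths j) <= Vsi j.+1)%VS.
Proof.
apply: esp_sub hSAs _ => k hk; rewrite q2inv !hths mulrCA qD => /q_cancel -/(_ has).
lia.
Qed.

Lemma Vsi_down j : (passmx.leigenspace As ((q ^ (-2:int))^-1 * ths j) <= Vsi j.-1)%VS.
Proof.
apply: esp_sub hSAs _ => k hk; rewrite qm2inv !hths mulrCA qD => /q_cancel -/(_ has).
lia.
Qed.


Lemma subE (f : 'End(V)) c v : (f - c *: \1)%VF v = f v - c *: v.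
Proof. by rewrite !(add_lfunE, opp_lfunE, scale_lfunE, id_lfunE). Qed.

Local Notation U i := ((\sum_(0 <= j < i.+1) Vsi j) :&: (\sum_(0 <= j < (d - i).+1) Vi j))%VS.
Local Notation Ud i := ((\sum_(d - i <= j < d.+1) Vsi j) :&: (\sum_(i <= j < d.+1) Vi j))%VS.

Hypotheses (hUsum : (\sum_(i < d.+1) U i)%VS = fullv)
  (hUdsum : (\sum_(i < d.+1) Ud i)%VS = fullv)
  (hB : forall i v, (i <= d)%N -> v \in U i -> B v = (b * q ^ ((2 * i)%:Z - d%:Z)) *: v)
  (hBs : forall i v, (i <= d)%N -> v \in Ud i -> Bs v = (bs * q ^ (d%:Z - (2 * i)%:Z)) *: v).

Lemma W1 v : Bs (A v) = q ^ (-2:int) *: A (Bs v) + ((1 - q ^ (-2:int)) * (a * bs)) *: v.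
Proof.
move: v; apply: (weyl (T := fun i => Ud i) (d:=d) (al := th)
   (mu := fun i => bs * q ^ (d%:Z - (2 * i)%:Z))).
- exact: hUdsum.
- by move=> i v hi hv; exact: hBs.
- move=> i v hi /memv_capP[hvF hvH].
  set w := A v - th i *: v.
  have hwH : w \in (\sum_(i.+1 <= j < d.+1) Vi j)%VS.
    have -> : w = (A - th i *: \1)%VF v by rewrite subE.
    apply: (sumI_map _ hvH) => j /andP[hj1 hj2] u hu.
    rewrite subE (esp_eig hu) -scalerBl.
    case: (ltngtP i j) => hij.
    + by apply: memvZ; apply: memI hu; rewrite hij hj2.
    + by exfalso; slia.
    + by rewrite hij subrr scale0r mem0v.
  have hwF : w \in (\sum_(d - i.+1 <= j < d.+1) Vsi j)%VS.
    have -> : w = (A - th i *: \1)%VF v by rewrite subE.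
    apply: (sumI_map _ hvF) => j /andP[hj1 hj2] u hu.
    rewrite subE; apply: memvB.
      have sub : (Vsi j.-1 + Vsi j + Vsi j.+1 <= \sum_(d - i.+1 <= j < d.+1) Vsi j)%VS.
        apply: tri_mem => m hm.
        by move: hm => /orP[/orP[/eqP->|/eqP->]|/eqP->]; apply/subvP => x hx; apply: memI_esp hx; slia.
      by move/subvP: sub; apply; exact: triA.
    by apply: memvZ; apply: memI_esp hu; slia.
  case: (ltngtP i d) => hid.
  + have hwU : w \in Ud i.+1 by rewrite memv_cap hwF hwH.
    rewrite (hBs _ _ hid hwU) mulrCA qD; congr (_ *: _); congr (_ * q ^ _); slia.
  + by exfalso; slia.
  + move: hwH; rewrite hid big_geq // memv0 => /eqP->.
    by rewrite linear0 scaler0.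
- move=> i hi; rewrite hth mulrACA qD.
  by rewrite (_ : _ + _ = 0) ?expr0z ?mulr1 //; slia.
Qed.


Lemma W2 v : Bs (As v) = q ^ (2:int) *: As (Bs v) + ((1 - q ^ (2:int)) * (as_ * bs)) *: v.
Proof.
move: v; apply: (weyl (T := fun i => Ud i) (d:=d)
   (al := fun i => as_ * q ^ ((2 * i)%:Z - d%:Z))
   (mu := fun i => bs * q ^ (d%:Z - (2 * i)%:Z))).
- exact: hUdsum.
- by move=> i v hi hv; exact: hBs.
- move=> i v hi /memv_capP[hvF hvH].
  set w := As v - _ *: v.
  have hwF : w \in (\sum_((d - i).+1 <= j < d.+1) Vsi j)%VS.
    have -> : w = (As - (as_ * q ^ ((2 * i)%:Z - d%:Z)) *: \1)%VF v by rewrite subE.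
    apply: (sumI_map _ hvF) => j /andP[hj1 hj2] u hu.
    rewrite subE (esp_eig hu) -scalerBl.
    case: (ltngtP (d - i) j) => hij.
    + by apply: memvZ; apply: memI hu; rewrite hij hj2.
    + by exfalso; slia.
    + rewrite -hij hths (_ : (d%:Z - (2 * (d - i))%:Z) = (2 * i)%:Z - d%:Z); last by slia.
      by rewrite subrr scale0r mem0v.
  have hwH : w \in (\sum_(i.-1 <= j < d.+1) Vi j)%VS.
    have -> : w = (As - (as_ * q ^ ((2 * i)%:Z - d%:Z)) *: \1)%VF v by rewrite subE.
    apply: (sumI_map _ hvH) => j /andP[hj1 hj2] u hu.
    rewrite subE; apply: memvB.
      have sub : (Vi j.-1 + Vi j + Vi j.+1 <= \sum_(i.-1 <= j < d.+1) Vi j)%VS.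
        apply: tri_mem => m hm.
        by move: hm => /orP[/orP[/eqP->|/eqP->]|/eqP->]; apply/subvP => x hx; apply: memI_esp hx; slia.
      by move/subvP: sub; apply; exact: triAs.
    by apply: memvZ; apply: memI_esp hu; slia.
  case: i hi hvF hvH w hwF hwH => [|i] hi hvF hvH w hwF hwH.
  + move: hwF; rewrite subn0 big_geq // memv0 => /eqP->.
    by rewrite linear0 scaler0.
  + have hid : (i <= d)%N by slia.
    have hwU : w \in Ud i.
      rewrite memv_cap hwH andbT.
      by rewrite (_ : (d - i.+1).+1 = d - i)%N in hwF; last slia.
    rewrite (hBs _ _ hid hwU) mulrCA qD; congr (_ *: _); congr (_ * q ^ _); slia.
- move=> i hi /=; rewrite mulrACA qD.
  by rewrite (_ : _ + _ = 0) ?expr0z ?mulr1 //; slia.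
Qed.

Lemma W3 v : B (A v) = q ^ (2:int) *: A (B v) + ((1 - q ^ (2:int)) * (a * b)) *: v.
Proof.
move: v; apply: (weyl (T := fun i => U i) (d:=d)
   (al := fun i => a * q ^ (d%:Z - (2 * i)%:Z))
   (mu := fun i => b * q ^ ((2 * i)%:Z - d%:Z))).
- exact: hUsum.
- by move=> i v hi hv; exact: hB.
- move=> i v hi /memv_capP[hvF hvH].
  set w := A v - _ *: v.
  have hwH : w \in (\sum_(0 <= j < d - i) Vi j)%VS.
    have -> : w = (A - (a * q ^ (d%:Z - (2 * i)%:Z)) *: \1)%VF v by rewrite subE.
    apply: (sumI_map _ hvH) => j /andP[hj1 hj2] u hu.
    rewrite subE (esp_eig hu) -scalerBl.
    case: (ltngtP j (d - i)) => hij.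
    + by apply: memvZ; apply: memI hu; rewrite hij.
    + by exfalso; slia.
    + rewrite hij hth (_ : ((2 * (d - i))%:Z - d%:Z) = d%:Z - (2 * i)%:Z); last by slia.
      by rewrite subrr scale0r mem0v.
  have hwF : w \in (\sum_(0 <= j < i.+2) Vsi j)%VS.
    have -> : w = (A - (a * q ^ (d%:Z - (2 * i)%:Z)) *: \1)%VF v by rewrite subE.
    apply: (sumI_map _ hvF) => j /andP[hj1 hj2] u hu.
    rewrite subE; apply: memvB.
      have sub : (Vsi j.-1 + Vsi j + Vsi j.+1 <= \sum_(0 <= j < i.+2) Vsi j)%VS.
        apply: tri_mem => m hm.
        by move: hm => /orP[/orP[/eqP->|/eqP->]|/eqP->]; apply/subvP => x hx; apply: memI_esp hx; slia.
      by move/subvP: sub; apply; exact: triA.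
    by apply: memvZ; apply: memI_esp hu; slia.
  case: (ltngtP i d) => hid.
  + have hwU : w \in U i.+1.
      rewrite memv_cap hwF /=.
      by rewrite (_ : (d - i.+1).+1 = d - i)%N; last slia.
    rewrite (hB _ _ hid hwU) mulrCA qD; congr (_ *: _); congr (_ * q ^ _); slia.
  + by exfalso; slia.
  + move: hwH; rewrite hid subnn big_geq // memv0 => /eqP->.
    by rewrite linear0 scaler0.
- move=> i hi /=; rewrite mulrACA qD.
  by rewrite (_ : _ + _ = 0) ?expr0z ?mulr1 //; slia.
Qed.

Lemma W4 v : B (As v) = q ^ (-2:int) *: As (B v) + ((1 - q ^ (-2:int)) * (as_ * b)) *: v.
Proof.
move: v; apply: (weyl (T := fun i => U i) (d:=d) (al := ths)
   (mu := fun i => b * q ^ ((2 * i)%:Z - d%:Z))).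
- exact: hUsum.
- by move=> i v hi hv; exact: hB.
- move=> i v hi /memv_capP[hvF hvH].
  set w := As v - _ *: v.
  have hwF : w \in (\sum_(0 <= j < i) Vsi j)%VS.
    have -> : w = (As - ths i *: \1)%VF v by rewrite subE.
    apply: (sumI_map _ hvF) => j /andP[hj1 hj2] u hu.
    rewrite subE (esp_eig hu) -scalerBl.
    case: (ltngtP j i) => hij.
    + by apply: memvZ; apply: memI hu; rewrite hij.
    + by exfalso; slia.
    + by rewrite hij subrr scale0r mem0v.
  have hwH : w \in (\sum_(0 <= j < (d - i).+2) Vi j)%VS.
    have -> : w = (As - ths i *: \1)%VF v by rewrite subE.
    apply: (sumI_map _ hvH) => j /andP[hj1 hj2] u hu.
    rewrite subE; apply: memvB.
      have sub : (Vi j.-1 + Vi j + Vi j.+1 <= \sum_(0 <= j < (d - i).+2) Vi j)%VS.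
        apply: tri_mem => m hm.
        by move: hm => /orP[/orP[/eqP->|/eqP->]|/eqP->]; apply/subvP => x hx; apply: memI_esp hx; slia.
      by move/subvP: sub; apply; exact: triAs.
    by apply: memvZ; apply: memI_esp hu; slia.
  case: i hi hvF hvH w hwF hwH => [|i] hi hvF hvH w hwF hwH.
  + move: hwF; rewrite big_geq // memv0 => /eqP->.
    by rewrite linear0 scaler0.
  + have hid : (i <= d)%N by slia.
    have hwU : w \in U i.
      rewrite memv_cap hwF /=.
      by rewrite (_ : (d - i).+1 = (d - i.+1).+2)%N; last slia.
    rewrite (hB _ _ hid hwU) mulrCA qD; congr (_ *: _); congr (_ * q ^ _); slia.
- move=> i hi /=; rewrite hths mulrACA qD.
  by rewrite (_ : _ + _ = 0) ?expr0z ?mulr1 //; slia.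
Qed.


Lemma BsVi v j : v \in Vi j -> Bs v \in (Vi j + Vi j.+1)%VS.
Proof. move=> hv; exact: (shift_mem (qnz _) (thnz j) W1 (esp_eig hv) hv (Vi_up j)). Qed.
Lemma BsVsi v j : v \in Vsi j -> Bs v \in (Vsi j + Vsi j.+1)%VS.
Proof. move=> hv; exact: (shift_mem (qnz _) (thsnz j) W2 (esp_eig hv) hv (Vsi_up j)). Qed.
Lemma BVi v j : v \in Vi j -> B v \in (Vi j + Vi j.-1)%VS.
Proof. move=> hv; exact: (shift_mem (qnz _) (thnz j) W3 (esp_eig hv) hv (Vi_down j)). Qed.
Lemma BVsi v j : v \in Vsi j -> B v \in (Vsi j + Vsi j.-1)%VS.
Proof. move=> hv; exact: (shift_mem (qnz _) (thsnz j) W4 (esp_eig hv) hv (Vsi_down j)). Qed.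

Lemma cubic (r : K) : (r = q ^ (2:int) \/ r = q ^ (-2:int)) ->
  r ^+ 3 - qint3 q * r ^+ 2 + qint3 q * r - 1 = 0.
Proof.
have hq2 : q ^+ 2 != 1 by apply: hqn.
have hq1 : q - q^-1 != 0.
  apply: contra hq2; rewrite subr_eq0 => /eqP h.
  by rewrite expr2 {1}h mulVf.
rewrite /qint3 -invr_expz; case=> ->; field; by rewrite hq0 subr_eq0 -expr2 hq2.
Qed.


Lemma span_esp (f g : 'End(V)) th' : Defs.diagonalizable f -> standard_ordering f g d th' ->
  (\sum_(i < d.+1) esp f d th' i)%VS = fullv.
Proof.
case=> s hs [_ _ h3 _].
apply/eqP; rewrite eqEsubv subvf /= -hs.
elim: s {hs} => [|x s IH]; first by rewrite big_nil sub0v.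
rewrite big_cons subv_add IH andbT.
have [->|nz] := eqVneq (passmx.leigenspace f x) 0%VS; first exact: sub0v.
have [j hj ->] := h3 x nz.
have hj1 : (j < d.+1)%N by [].
by apply: (sumv_sup (Ordinal hj1)) => //=; rewrite /esp hj subvv.
Qed.

Hypotheses (hdA : Defs.diagonalizable A) (hdAs : Defs.diagonalizable As)
  (hUdir : directv (\sum_(i < d.+1) U i)) (hUddir : directv (\sum_(i < d.+1) Ud i)).

Lemma serre1 : qserre q A As = 0.
Proof.
rewrite /qserre; apply: (serre_gen (W := Vi) (lam := th) (r := q ^ (2:int)) (d := d)).
- exact: span_esp hdA hSA.
- move=> i v hv; exact: (esp_eig hv).
- by move=> i; rewrite !hth mulrCA qD; congr (_ * q ^ _); slia.
- by apply: cubic; left.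
- by move=> i v _ hv; exact: triAs.
Qed.

Lemma serre2 : qserre q As A = 0.
Proof.
rewrite /qserre; apply: (serre_gen (W := Vsi) (lam := ths) (r := q ^ (-2:int)) (d := d)).
- exact: span_esp hdAs hSAs.
- move=> i v hv; exact: (esp_eig hv).
- by move=> i; rewrite !hths mulrCA qD; congr (_ * q ^ _); slia.
- by apply: cubic; right.
- by move=> i v _ hv; exact: triA.
Qed.


Lemma serre3 : qserre q B Bs = 0.
Proof.
pose W i := if (i <= d)%N then U i else 0%VS.
rewrite /qserre; apply: (serre_gen (W := W) (lam := fun i => b * q ^ ((2 * i)%:Z - d%:Z))
   (r := q ^ (2:int)) (d := d)).
- by rewrite -?hUsum -?hUdsum; apply: eq_bigr => i _; rewrite /W -ltnS ltn_ord.
- move=> i v; rewrite /W; case: ifP => hi; first exact: hB.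
  by rewrite memv0 => /eqP->; rewrite linear0 scaler0.
- by move=> i; rewrite mulrCA qD; congr (_ * q ^ _); slia.
- by apply: cubic; left.
- move=> i0 v0 hi0 hv0; rewrite /W hi0 in hv0.
  apply: (split_tri (F := fun i => (\sum_(0 <= j < i.+1) Vsi j)%VS)
                   (H := fun i => (\sum_(0 <= j < (d - i).+1) Vi j)%VS) _ _ _ _ _ _ _ hi0 hv0).
  + by move=> i; apply: sumI_mono.
  + by move=> i; apply: sumI_mono => //; slia.
  + exact: dir_adj hUdir.
  + exact: hUsum.
  + by move=> i hi; rewrite /W hi subvv.
  + move=> i v hi hv; apply: (sumI_map _ hv) => j /andP[_ hj] u hu.
    by apply: (memI2 _ _ _ _ (BsVsi _ _ hu)); slia.
  + move=> i v hi hv; apply: (sumI_map _ hv) => j /andP[_ hj] u hu.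
    by apply: (memI2 _ _ _ _ (BsVi _ _ hu)); slia.
Qed.

Lemma serre4 : qserre q Bs B = 0.
Proof.
pose W i := if (i <= d)%N then Ud i else 0%VS.
rewrite /qserre; apply: (serre_gen (W := W) (lam := fun i => bs * q ^ (d%:Z - (2 * i)%:Z))
   (r := q ^ (-2:int)) (d := d)).
- by rewrite -hUdsum; apply: eq_bigr => i _; rewrite /W -ltnS ltn_ord.
- move=> i v; rewrite /W; case: ifP => hi; first exact: hBs.
  by rewrite memv0 => /eqP->; rewrite linear0 scaler0.
- by move=> i; rewrite mulrCA qD; congr (_ * q ^ _); slia.
- by apply: cubic; right.
- move=> i0 v0 hi0 hv0; rewrite /W hi0 in hv0.
  apply: (split_tri (F := fun i => (\sum_(d - i <= j < d.+1) Vsi j)%VS)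
                   (H := fun i => (\sum_(i <= j < d.+1) Vi j)%VS) _ _ _ _ _ _ _ hi0 hv0).
  + by move=> i; apply: sumI_mono => //; slia.
  + by move=> i; apply: sumI_mono => //; slia.
  + exact: dir_adj hUddir.
  + exact: hUdsum.
  + by move=> i hi; rewrite /W hi subvv.
  + move=> i v hi hv; apply: (sumI_map _ hv) => j /andP[hj _] u hu.
    by apply: (memI2 _ _ _ _ (BVsi _ _ hu)); slia.
  + move=> i v hi hv; apply: (sumI_map _ hv) => j /andP[hj _] u hu.
    by apply: (memI2 _ _ _ _ (BVi _ _ hu)); slia.
Qed.

End Main.

End MainPart.
Import MainPart.

Theorem theorem12p1 (K : closedFieldType) (q : K) (V : vectType K)
  (A As B Bs : 'End(V)) (d : nat) (a as_ b bs : K) :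
  q != 0 ->
  (forall n : nat, (0 < n)%N -> q ^+ n != 1) ->
  (0 < \dim (fullv : {vspace V}))%N ->
  tridiagonal_pair A As ->
  standard_ordering A As d (fun i => a * q ^ ((2 * i)%:Z - d%:Z)) ->
  standard_ordering As A d (fun i => as_ * q ^ (d%:Z - (2 * i)%:Z)) ->
  a != 0 -> as_ != 0 -> b != 0 -> bs != 0 ->
  let Vi := fun i => esp A d (fun i => a * q ^ ((2 * i)%:Z - d%:Z)) i in
  let Vsi := fun i => esp As d (fun i => as_ * q ^ (d%:Z - (2 * i)%:Z)) i in
  let U := fun i => ((\sum_(0 <= j < i.+1) Vsi j) :&: (\sum_(0 <= j < (d - i).+1) Vi j))%VS in
  let Ud := fun i => ((\sum_(d - i <= j < d.+1) Vsi j) :&: (\sum_(i <= j < d.+1) Vi j))%VS in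
  (forall i, (i <= d)%N -> U i != 0%VS) ->
  directv (\sum_(i < d.+1) U i) -> (\sum_(i < d.+1) U i)%VS = fullv ->
  (forall i, (i <= d)%N -> Ud i != 0%VS) ->
  directv (\sum_(i < d.+1) Ud i) -> (\sum_(i < d.+1) Ud i)%VS = fullv ->
  (forall i v, (i <= d)%N -> v \in U i -> B v = (b * q ^ ((2 * i)%:Z - d%:Z)) *: v) ->
  (forall i v, (i <= d)%N -> v \in Ud i -> Bs v = (bs * q ^ (d%:Z - (2 * i)%:Z)) *: v) ->
  [/\ qserre q A As = 0, qserre q As A = 0, qserre q B Bs = 0 & qserre q Bs B = 0].
Proof.
move=> hq0 hqn _ [hdA hdAs _ _ _] hSA hSAs ha has hb hbs Vi Vsi U Ud _ hUdir hUsum _ hUddir hUdsum hB hBs.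
split.
- exact: (serre1 _ _ _ _ _ _ _ hq0 hqn _ (fun i => erefl) hSA hdA).
- exact: (serre2 _ _ _ _ _ _ _ hq0 hqn _ (fun i => erefl) hSAs hdAs).
- exact: (serre3 _ _ _ _ _ _ _ _ _ _ _ _ hq0 hqn _ _ (fun i => erefl) (fun i => erefl)
           hSA hSAs ha has hb hbs hUsum hUdsum hB hBs hUdir).
- exact: (serre4 _ _ _ _ _ _ _ _ _ _ _ _ hq0 hqn _ _ (fun i => erefl) (fun i => erefl)
           hSA hSAs ha has hb hbs hUsum hUdsum hB hBs hUddir).
Qed.
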